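(* For an integer $p\ge 2$ let $S(p)=\sum_{k\geq 0}\frac{\left(k+1-\frac{p}{2}\left\lfloor\frac{k}{p}\right\rfloor\right)\left(\left\lfloor\frac{k}{p}\right\rfloor+1\right)}{(k+1)(k+p+1)(k+2)(k+p)}$. Then \[ S(3)=\frac{\pi}{18\sqrt{3}},\qquad S(4)=\frac{\pi}{48},\qquad S(6)=\frac{7\pi}{360\sqrt{3}}, \] \[ S(5)=\frac{\left(\sqrt{5}-1\right)\sqrt{5-\sqrt{5}}+3\left(\sqrt{5}+1\right)\sqrt{5+\sqrt{5}}}{600\sqrt{10}}\,\pi . \]
   Context: $\lfloor\cdot\rfloor$ denotes the floor function. *)

(* Defs.v *)
From Stdlib Require Import Reals Lra Lia Arith.
Open Scope R_scope.

Definition S_term (p : nat) (k : nat) : R :=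
  let q := INR (Nat.div k p) in
  let kk := INR k in
  let pp := INR p in
  ((kk + 1 - (pp / 2) * q) * (q + 1)) /
  ((kk + 1) * (kk + pp + 1) * (kk + 2) * (kk + pp)).

(* Main.v *)
Require Import Defs.
From Coquelicot Require Import Coquelicot.
From Stdlib Require Import Reals Lra Lia Psatz Arith.
Open Scope R_scope.

Lemma int_quad (th : R) : 0 < th < PI ->
  is_RInt (fun x => / (x^2 + 2*cos th * x + 1)) 0 1 (th / (2 * sin th)).
Proof.
  intros [H0 H1].
  set (s := sin th). set (c := cos th).
  assert (Hs : 0 < s) by (apply sin_gt_0; lra).
  assert (Hcs : s^2 + c^2 = 1) by (unfold s, c; rewrite <- (sin2_cos2 th); unfold Rsqr; ring).
  assert (Hq : forall x, 0 < x^2 + 2*c*x + 1) by (intro x; assert (0 <= (x+c)^2) by apply pow2_ge_0; nra).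
  set (F := fun x => / s * atan ((x + c) / s)).
  assert (HF : forall x, is_derive F x (/ (x^2 + 2*c*x + 1))).
  { intro x. unfold F.
    assert (Hg : is_derive (fun x => (x + c)/s) x (/ s)).
    { auto_derive. lra. field. lra. }
    pose proof (is_derive_comp atan (fun x => (x + c)/s) x _ _
       (proj2 (is_derive_Reals _ _ _) (derivable_pt_lim_atan ((x+c)/s))) Hg) as Hd.
    pose proof (is_derive_scal _ x (/ s) _ Hd) as Hd2.
    simpl in Hd2.
    replace (/ (x^2 + 2*c*x + 1)) with
      (/ s * scal (/ s) (/ (1 + ((x + c) / s) ^ 2))). exact Hd2.
    unfold scal; simpl; unfold mult; simpl.
    assert (0 < 1 + ((x + c) / s) ^ 2) by (apply Rplus_lt_le_0_compat; [lra| apply pow2_ge_0]).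
    specialize (Hq x).
    field_simplify_eq; try lra; try nra. }
  assert (Hc : forall x, continuous (fun x => / (x^2 + 2*c*x + 1)) x).
  { intro x. apply (ex_derive_continuous (V:=R_NormedModule) (fun x => / (x^2 + 2*c*x + 1))). auto_derive. specialize (Hq x). lra. }
  pose proof (is_RInt_derive F (fun x => / (x^2 + 2*c*x + 1)) 0 1
     (fun x _ => HF x) (fun x _ => Hc x)) as HI.
  replace (th / (2 * s)) with (minus (F 1) (F 0)); [exact HI|].
  unfold minus, plus, opp; simpl. unfold F.
  set (h := th / 2).
  assert (Hh : th = 2 * h) by (unfold h; lra).
  assert (Hsh : 0 < sin h) by (apply sin_gt_0; unfold h; lra).
  assert (Hch : 0 < cos h) by (apply cos_gt_0; unfold h; lra).
  assert (E1 : (1 + c) / s = tan (PI/2 - h)).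
  { unfold tan. rewrite sin_shift, cos_shift. unfold c, s. rewrite Hh.
    rewrite cos_2a_cos, sin_2a. field. lra. }
  assert (E2 : (0 + c) / s = tan (PI/2 - th)).
  { unfold tan. rewrite sin_shift, cos_shift. fold c s. field. lra. }
  rewrite E1, E2, !atan_tan; try (split; unfold h; lra).
  fold s. unfold h. field. lra.
Qed.

Fixpoint PS (f : nat -> R) (n : nat) : R :=
  match n with O => 0 | S m => PS f m + f m end.

Lemma sum_PS f n : sum_f_R0 f n = PS f (S n).
Proof. induction n; simpl; [ring| rewrite IHn; simpl; ring]. Qed.

Lemma PS_add f m n : PS f (m + n) = PS f m + PS (fun r => f (m + r)%nat) n.
Proof.
  induction n; simpl. rewrite Nat.add_0_r; ring.
  rewrite Nat.add_succ_r. simpl. rewrite IHn. ring.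
Qed.

Definition Nf (P rho y : R) := (y + rho + 2) * (y - rho + P).
Definition b1 P rho := Nf P rho (-1) / (2*P*((P-1)*P)).
Definition b2 P rho := - Nf P rho (-2) / (2*P*((P-2)*(P-1))).
Definition bP P rho := Nf P rho (-P) / (2*P*((P-1)*(P-2))).
Definition bP1 P rho := - Nf P rho (-P-1) / (2*P*(P*(P-1))).

Definition fk (p k : nat) (x : R) : R :=
  let P := INR p in let rho := INR (k mod p) in
  b1 P rho * x^k + b2 P rho * x^(k+1) + bP P rho * x^(k+p-1) + bP1 P rho * x^(k+p).

Lemma int_mono n : is_RInt (fun x => x^n) 0 1 (/ (INR n + 1)).
Proof.
  pose proof (is_RInt_pow 0 1 n) as H.
  replace (/ (INR n + 1)) with (1 ^ S n / INR (S n) - 0 ^ S n / INR (S n)); auto.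
  rewrite pow1, pow_i by lia. rewrite S_INR. field.
  pose proof (pos_INR n). lra.
Qed.

Lemma term_eq p k : (3 <= p)%nat ->
  S_term p k = b1 (INR p) (INR (k mod p)) / (INR k + 1) + b2 (INR p) (INR (k mod p)) / (INR k + 2)
   + bP (INR p) (INR (k mod p)) / (INR k + INR p) + bP1 (INR p) (INR (k mod p)) / (INR k + INR p + 1).
Proof.
  intro Hp.
  assert (Hk : INR k = INR p * INR (k / p) + INR (k mod p)).
  { rewrite <- mult_INR, <- plus_INR. f_equal. apply Nat.div_mod. lia. }
  assert (HP : 3 <= INR p) by (replace 3 with (INR 3) by (simpl; ring); apply le_INR; lia).
  pose proof (pos_INR k). pose proof (pos_INR (k/p)). pose proof (pos_INR (k mod p)).
  unfold S_term, b1, b2, bP, bP1, Nf. cbv zeta.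
  set (P := INR p) in *. set (q := INR (k/p)) in *. set (r := INR (k mod p)) in *.
  rewrite Hk. field. repeat split; nra.
Qed.

Lemma RI_plus (f g : R -> R) A B : is_RInt f 0 1 A -> is_RInt g 0 1 B ->
  is_RInt (fun x => f x + g x) 0 1 (A + B).
Proof. intros. apply (is_RInt_plus f g); auto. Qed.

Lemma RI_minus (f g : R -> R) A B : is_RInt f 0 1 A -> is_RInt g 0 1 B ->
  is_RInt (fun x => f x - g x) 0 1 (A - B).
Proof. intros. apply (is_RInt_minus f g); auto. Qed.

Lemma RI_scal (f : R -> R) c A : is_RInt f 0 1 A ->
  is_RInt (fun x => c * f x) 0 1 (c * A).
Proof. intros. apply (is_RInt_scal f); auto. Qed.

Lemma RI_ext (f g : R -> R) A B : (forall x, f x = g x) -> A = B -> is_RInt f 0 1 A -> is_RInt g 0 1 B.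
Proof. intros H e H1. subst. apply (is_RInt_ext f); auto. Qed.

Lemma int_cmono c n D : D = INR n + 1 -> is_RInt (fun x => c * x^n) 0 1 (c / D).
Proof. intro H. rewrite H. apply RI_scal, int_mono. Qed.

Lemma int_fk p k : (3 <= p)%nat -> is_RInt (fk p k) 0 1 (S_term p k).
Proof.
  intro Hp. rewrite term_eq by auto. unfold fk.
  set (P := INR p). set (rho := INR (k mod p)).
  apply RI_plus; [apply RI_plus; [apply RI_plus|]|]; apply int_cmono.
  - ring.
  - rewrite plus_INR. simpl. ring.
  - rewrite minus_INR by lia. rewrite plus_INR. simpl. unfold P. ring.
  - rewrite plus_INR. unfold P. ring.
Qed.

Lemma int_PS p n : (3 <= p)%nat -> is_RInt (fun x => PS (fun k => fk p k x) n) 0 1 (PS (S_term p) n).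
Proof.
  intro Hp. induction n; simpl.
  - apply (RI_ext (fun x => 0 * x^0) _ (0 / (INR 0 + 1))); [intro; ring| simpl; field| ].
    apply int_cmono; auto.
  - apply RI_plus; auto. apply int_fk; auto.
Qed.

Lemma PS_ext f g n : (forall r, (r < n)%nat -> f r = g r) -> PS f n = PS g n.
Proof.
  induction n; intro H; simpl; auto.
  rewrite IHn by (intros; apply H; lia). rewrite H by lia. auto.
Qed.

Lemma PS_scal c f n : PS (fun r => c * f r) n = c * PS f n.
Proof. induction n; simpl; [ring| rewrite IHn; ring]. Qed.

Lemma fk_shift p M r x : (0 < p)%nat -> (r < p)%nat -> fk p (p*M + r) x = x^(p*M) * fk p r x.
Proof.
  intros Hp Hr. unfold fk.
  replace ((p * M + r) mod p)%nat with r.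
  2:{ rewrite Nat.add_comm, Nat.mul_comm, Nat.Div0.mod_add, Nat.mod_small; auto. }
  rewrite (Nat.mod_small r p Hr).
  replace (p*M + r + 1)%nat with (p*M + (r+1))%nat by lia.
  replace (p*M + r + p - 1)%nat with (p*M + (r+p-1))%nat by lia.
  replace (p*M + r + p)%nat with (p*M + (r+p))%nat by lia.
  rewrite !pow_add. ring.
Qed.

Lemma block p x H : (0 < p)%nat -> PS (fun r => fk p r x) p = (1 - x^p) * H ->
  forall M, PS (fun k => fk p k x) (p*M) = (1 - x^(p*M)) * H.
Proof.
  intros Hp Hb M. induction M.
  - rewrite Nat.mul_0_r. simpl. ring.
  - replace (p * S M)%nat with (p*M + p)%nat by lia.
    rewrite PS_add, IHM.
    rewrite (PS_ext _ (fun r => x^(p*M) * fk p r x)) by (intros; apply fk_shift; auto).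
    rewrite PS_scal, Hb, pow_add. ring.
Qed.

Lemma Sterm_nonneg p k : (3 <= p)%nat -> 0 <= S_term p k.
Proof.
  intro Hp. unfold S_term. cbv zeta.
  assert (Hk : INR k = INR p * INR (k / p) + INR (k mod p)).
  { rewrite <- mult_INR, <- plus_INR. f_equal. apply Nat.div_mod. lia. }
  assert (HP : 3 <= INR p) by (replace 3 with (INR 3) by (simpl; ring); apply le_INR; lia).
  pose proof (pos_INR k). pose proof (pos_INR (k/p)). pose proof (pos_INR (k mod p)).
  set (P := INR p) in *. set (q := INR (k/p)) in *.
  apply Rmult_le_pos.
  - apply Rmult_le_pos; nra.
  - left. apply Rinv_0_lt_compat. repeat apply Rmult_lt_0_compat; lra.
Qed.

Lemma PS_mono f n m : (forall k, 0 <= f k) -> (n <= m)%nat -> PS f n <= PS f m.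
Proof.
  intros Hf Hnm. induction Hnm; [lra| simpl; specialize (Hf m); lra].
Qed.

Lemma conv p (H : R -> R) I C : (3 <= p)%nat -> is_RInt H 0 1 I ->
  (forall x, 0 <= x <= 1 -> Rabs (H x) <= C) ->
  (forall x, PS (fun r => fk p r x) p = (1 - x^p) * H x) ->
  infinite_sum (S_term p) I.
Proof.
  intros Hp HI HC Hb.
  set (A := PS (S_term p)).
  assert (E : forall M, is_RInt (fun x => H x * x^(p*M)) 0 1 (I - A (p*M)%nat)).
  { intro M. eapply RI_ext; [| reflexivity| apply (RI_minus _ _ _ _ HI (int_PS p (p*M) Hp))].
    intro x. simpl. rewrite (block p x (H x)) by (auto; lia). ring. }
  assert (Bd : forall M, Rabs (I - A (p*M)%nat) <= C / (INR (p*M) + 1)).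
  { intro M. set (n := (p*M)%nat). apply Rabs_le. split.
    - replace (- (C / (INR n + 1))) with (- C / (INR n + 1)) by (field; pose proof (pos_INR n); lra).
      eapply (is_RInt_le (fun x => -C * x^n) (fun x => H x * x^n) 0 1); [lra| apply int_cmono; auto | apply E|].
      intros x Hx. pose proof (HC x ltac:(lra)). apply Rabs_le_between in H0 as [H0 H1].
      pose proof (pow_le x n ltac:(lra)). nra.
    - eapply (is_RInt_le (fun x => H x * x^n) (fun x => C * x^n) 0 1); [lra| apply E | apply int_cmono; auto|].
      intros x Hx. pose proof (HC x ltac:(lra)). apply Rabs_le_between in H0 as [H0 H1].
      pose proof (pow_le x n ltac:(lra)). nra. }
  assert (HC0 : 0 <= C) by (pose proof (HC 0 ltac:(lra)); pose proof (Rabs_pos (H 0)); lra).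
  assert (Hmono : forall n m, (n <= m)%nat -> A n <= A m).
  { intros. apply PS_mono; auto. intro; apply Sterm_nonneg; auto. }
  assert (Small : forall e, 0 < e -> exists M, forall M', (M <= M')%nat -> C / (INR (p*M') + 1) < e).
  { intros e He. destruct (INR_archimed e C He) as [M HM]. exists M. intros M' HM'.
    assert (INR M <= INR (p*M')) by (apply le_INR; nia).
    pose proof (pos_INR M).
    apply (Rmult_lt_reg_r (INR (p*M') + 1)); [lra|].
    unfold Rdiv. rewrite Rmult_assoc, Rinv_l by lra. nra. }
  assert (Le : forall n, A n <= I).
  { intro n. destruct (Rle_or_lt (A n) I) as [h|h]; auto.
    destruct (Small (A n - I) ltac:(lra)) as [M HM].
    specialize (HM (Nat.max M n) (Nat.le_max_l _ _)).
    specialize (Bd (Nat.max M n)).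
    assert (A n <= A (p * Nat.max M n)%nat) by (apply Hmono; nia).
    apply Rabs_le_between in Bd. lra. }
  intros eps Heps. destruct (Small eps Heps) as [M HM].
  exists (p*M)%nat. intros n Hn. unfold R_dist. rewrite sum_PS. fold A.
  specialize (HM M (le_n _)). specialize (Bd M). apply Rabs_le_between in Bd.
  assert (A (p*M)%nat <= A (S n)) by (apply Hmono; lia).
  specialize (Le (S n)).
  rewrite Rabs_left1 by lra. lra.
Qed.

Lemma bnd_mono a n x : 0 <= x <= 1 -> Rabs (a * x^n) <= Rabs a.
Proof.
  intro Hx. rewrite Rabs_mult, <- RPow_abs.
  rewrite (Rabs_pos_eq x) by lra.
  pose proof (Rabs_pos a). pose proof (pow_le x n ltac:(lra)).
  assert (x^n <= 1) by (rewrite <- (pow1 n); apply pow_incr; lra). nra.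
Qed.

Lemma bnd_inv g th x : 0 <= x <= 1 -> -1/2 <= cos th ->
  Rabs (g * / (x^2 + 2 * cos th * x + 1)) <= Rabs g * (4/3).
Proof.
  intros Hx Hc. rewrite Rabs_mult.
  assert (Hq : 3/4 <= x^2 + 2 * cos th * x + 1) by (assert (0 <= (cos th + 1/2) * x) by (apply Rmult_le_pos; lra); assert (0 <= (x - 1/2)^2) by apply pow2_ge_0; nra).
  rewrite (Rabs_pos_eq (/ _)) by (left; apply Rinv_0_lt_compat; lra).
  apply Rmult_le_compat_l; [apply Rabs_pos|].
  replace (4/3) with (/ (3/4)) by field. apply Rinv_le_contravar; lra.
Qed.

Ltac bnd := match goal with
 | |- Rabs (_ + _) <= _ => eapply Rle_trans; [apply Rabs_triang| apply Rplus_le_compat; bnd]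
 | _ => first [apply bnd_mono; assumption | apply bnd_inv; [assumption|] ]
 end.

Ltac rint := match goal with
 | |- is_RInt (fun x => @?f x + @?g x) 0 1 _ => apply RI_plus; rint
 | |- is_RInt (fun x => _ * / (@?f x)) 0 1 _ => apply RI_scal; apply int_quad
 | |- is_RInt (fun x => _ * x ^ _) 0 1 _ => apply int_cmono
 end.

Lemma RI_val (f : R -> R) A B : is_RInt f 0 1 A -> A = B -> is_RInt f 0 1 B.
Proof. intros; subst; auto. Qed.

Definition H3 (x : R) := (-1/9) * x^0 + (2/9) * x^1 + (1/6) * / (x^2 + 2 * cos (PI/3) * x + 1).

Lemma sum3 : infinite_sum (S_term 3) (PI / (18 * sqrt 3)).
Proof.
  assert (HPI := PI_RGT_0).
  assert (Hs3 : 0 < sqrt 3) by (apply sqrt_lt_R0; lra).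
  eapply (conv 3 H3 _ _ ltac:(lia)).
  - unfold H3. eapply RI_val. rint. all: try reflexivity. split; lra.
    match goal with |- ?a = ?b => change (@eq R a b) end. rewrite sin_PI3. change (INR 0) with 0. change (INR 1) with 1. field. lra.
  - intros x Hx. unfold H3. bnd. rewrite cos_PI3. lra.
  - intro x. unfold H3, fk. simpl. rewrite cos_PI3.
    assert (0 < x^2 + 2*(1/2)*x + 1) by (assert (0 <= (x+1/2)^2) by apply pow2_ge_0; nra).
    unfold b1, b2, bP, bP1, Nf. field. simpl in H. lra.
Qed.

Definition H4 (x : R) := (-5/96) * x^0 + (1/24) * x^1 + (3/32) * x^2 + (1/12) * / (x^2 + 2 * cos (PI/2) * x + 1).

Lemma sum4 : infinite_sum (S_term 4) (PI / 48).
Proof.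
  assert (HPI := PI_RGT_0).
  eapply (conv 4 H4 _ _ ltac:(lia)).
  - unfold H4. eapply RI_val. rint. all: try reflexivity. split; lra.
    match goal with |- ?a = ?b => change (@eq R a b) end. rewrite sin_PI2. simpl. field.
  - intros x Hx. unfold H4. bnd. rewrite cos_PI2. lra.
  - intro x. unfold H4, fk. simpl. rewrite cos_PI2.
    assert (0 < x^2 + 2*0*x + 1) by (assert (0 <= x^2) by apply pow2_ge_0; nra).
    unfold b1, b2, bP, bP1, Nf. field. simpl in H. lra.
Qed.

Definition H6 (x : R) := (-7/360) * x^0 + (1/180) * x^1 + (1/80) * x^2 + (1/45) * x^3 + (5/144) * x^4
  + (1/40) * / (x^2 + 2 * cos (2*(PI/3)) * x + 1) + (1/120) * / (x^2 + 2 * cos (PI/3) * x + 1).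

Lemma sum6 : infinite_sum (S_term 6) (7 * PI / (360 * sqrt 3)).
Proof.
  assert (HPI := PI_RGT_0).
  assert (Hs3 : 0 < sqrt 3) by (apply sqrt_lt_R0; lra).
  eapply (conv 6 H6 _ _ ltac:(lia)).
  - unfold H6. eapply RI_val. rint. all: try reflexivity; try (split; lra).
    match goal with |- ?a = ?b => change (@eq R a b) end. rewrite sin_PI3, sin_2PI3. simpl. field. lra.
  - intros x Hx. unfold H6. bnd; rewrite ?cos_PI3, ?cos_2PI3; lra.
  - intro x. unfold H6, fk. simpl. rewrite cos_PI3, cos_2PI3.
    assert (0 < x^2 + 2*(1/2)*x + 1) by (assert (0 <= (x+1/2)^2) by apply pow2_ge_0; nra).
    assert (0 < x^2 + 2*(-1/2)*x + 1) by (assert (0 <= (x-1/2)^2) by apply pow2_ge_0; nra).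
    unfold b1, b2, bP, bP1, Nf. field. simpl in *. lra.
Qed.
Lemma cos_PI5 : cos (PI/5) = (1 + sqrt 5)/4.
Proof.
  assert (HPI := PI_RGT_0).
  set (u := sqrt 5).
  assert (Hu : u * u = 5) by (apply sqrt_sqrt; lra).
  assert (Hu0 : 0 <= u) by apply sqrt_pos.
  assert (Hu2 : 2 < u) by nra.
  set (c := cos (PI/5)). set (s := sin (PI/5)).
  assert (Hc : 0 < c) by (apply cos_gt_0; lra).
  assert (Hss : s * s = 1 - c * c) by (pose proof (sin2 (PI/5)); unfold Rsqr in H; fold s c in H; lra).
  assert (H3 : cos (3 * (PI/5)) = - cos (2 * (PI/5))).
  { rewrite <- Rtrigo_facts.cos_pi_minus. f_equal. field. }
  replace (3 * (PI/5)) with (2*(PI/5) + PI/5) in H3 by ring.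
  rewrite cos_plus, sin_2a, cos_2a_cos in H3. fold c s in H3.
  assert (Hq : (c + 1) * (4*c*c - 2*c - 1) = 0) by nra.
  apply Rmult_integral in Hq as [Hq|Hq]; [lra|].
  assert (Hz : (4*c - 1 - u) * (4*c - 1 + u) = 0) by nra.
  apply Rmult_integral in Hz as [Hz|Hz]; lra.
Qed.

Lemma cos_3PI5 : cos (3*(PI/5)) = (1 - sqrt 5)/4.
Proof.
  assert (H3 : cos (3 * (PI/5)) = - cos (2 * (PI/5))).
  { rewrite <- Rtrigo_facts.cos_pi_minus. f_equal. field. }
  rewrite H3, cos_2a_cos, cos_PI5.
  assert (Hu : sqrt 5 * sqrt 5 = 5) by (apply sqrt_sqrt; lra).
  set (u := sqrt 5) in *. nra.
Qed.

Definition al5 := (3 - sqrt 5)/2.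
Definition be5 := (3 + sqrt 5)/2.

Definition H5 (x : R) := (-3/100) * x^0 + (1/75) * x^1 + (3/100) * x^2 + (4/75) * x^3
  + (al5/60) * / (x^2 + 2 * cos (PI/5) * x + 1) + (be5/60) * / (x^2 + 2 * cos (3*(PI/5)) * x + 1).

Lemma G5 x : (1 - x^5) * ((al5/60) * / (x^2 + 2 * cos (PI/5) * x + 1) + (be5/60) * / (x^2 + 2 * cos (3*(PI/5)) * x + 1))
  = (1 - x) * (3 + 4*x + 3*x^2) / 60.
Proof.
  rewrite cos_PI5, cos_3PI5. unfold al5, be5.
  assert (Hu : sqrt 5 * sqrt 5 = 5) by (apply sqrt_sqrt; lra).
  assert (Hu0 : 0 <= sqrt 5) by apply sqrt_pos.
  set (u := sqrt 5) in *.
  assert (Hu2 : 2 < u) by nra.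
  set (q1 := x ^ 2 + 2 * ((1 + u) / 4) * x + 1).
  set (q3 := x ^ 2 + 2 * ((1 - u) / 4) * x + 1).
  assert (P1 : 0 < q1) by (unfold q1; assert (0 <= (x + (1+u)/4)^2) by apply pow2_ge_0; nra).
  assert (P3 : 0 < q3) by (unfold q3; assert (0 <= (x + (1-u)/4)^2) by apply pow2_ge_0; nra).
  assert (F : 1 - x^5 = (1 - x) * q1 * q3).
  { transitivity ((1-x)*q1*q3 + (1-x)*(u*u-5)*x^2/4). unfold q1, q3. field. rewrite Hu. field. }
  rewrite F.
  transitivity ((1-x) * (((3 - u)/2/60) * q3 + ((3 + u)/2/60) * q1)); [field; lra|].
  transitivity ((1-x) * ((3 + 4*x + 3*x^2)/60 + (u*u-5)*x/120)); [unfold q1, q3; field| rewrite Hu; field].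
Qed.

Lemma sum5 : infinite_sum (S_term 5)
    (((sqrt 5 - 1) * sqrt (5 - sqrt 5) + 3 * (sqrt 5 + 1) * sqrt (5 + sqrt 5))
       / (600 * sqrt 10) * PI).
Proof.
  assert (HPI := PI_RGT_0).
  assert (Hu : sqrt 5 * sqrt 5 = 5) by (apply sqrt_sqrt; lra).
  assert (Hu0 : 0 <= sqrt 5) by apply sqrt_pos.
  assert (Hu2 : 2 < sqrt 5) by nra.
  eapply (conv 5 H5 _ _ ltac:(lia)).
  - unfold H5. eapply RI_val. rint. all: try reflexivity; try (split; lra).
    match goal with |- ?a = ?b => change (@eq R a b) end.
    set (u := sqrt 5) in *.
    set (v := sqrt (5 - u)). set (w := sqrt (5 + u)). set (t := sqrt 10).
    assert (Hu5 : u < 5) by nra.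
    assert (Hv : v * v = 5 - u) by (apply sqrt_sqrt; nra).
    assert (Hw : w * w = 5 + u) by (apply sqrt_sqrt; lra).
    assert (Ht : t * t = 10) by (apply sqrt_sqrt; lra).
    assert (Hv0 : 0 < v) by (apply sqrt_lt_R0; nra).
    assert (Hw0 : 0 < w) by (apply sqrt_lt_R0; lra).
    assert (Ht0 : 0 < t) by (apply sqrt_lt_R0; lra).
    assert (S1 : sin (PI/5) = v * t / (4 * u)).
    { assert (Hs : 0 < sin (PI/5)) by (apply sin_gt_0; lra).
      pose proof (sin2 (PI/5)) as E. unfold Rsqr in E. rewrite cos_PI5 in E. fold u in E.
      assert (K : (v*t/(4*u)) * (v*t/(4*u)) = (v*v)*(t*t)/(16*(u*u))) by (field; lra).
      rewrite Hv, Ht, Hu in K.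
      assert (0 < v*t/(4*u)) by (apply Rdiv_lt_0_compat; nra).
      assert (Z : (sin (PI/5) - v*t/(4*u)) * (sin (PI/5) + v*t/(4*u)) = 0) by nra.
      apply Rmult_integral in Z as [Z|Z]; lra. }
    assert (S3 : sin (3*(PI/5)) = w * t / (4 * u)).
    { assert (Hs : 0 < sin (3*(PI/5))) by (apply sin_gt_0; lra).
      pose proof (sin2 (3*(PI/5))) as E. unfold Rsqr in E. rewrite cos_3PI5 in E. fold u in E.
      assert (K : (w*t/(4*u)) * (w*t/(4*u)) = (w*w)*(t*t)/(16*(u*u))) by (field; lra).
      rewrite Hw, Ht, Hu in K.
      assert (0 < w*t/(4*u)) by (apply Rdiv_lt_0_compat; nra).
      assert (Z : (sin (3*(PI/5)) - w*t/(4*u)) * (sin (3*(PI/5)) + w*t/(4*u)) = 0) by nra.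
      apply Rmult_integral in Z as [Z|Z]; lra. }
    assert (L1 : (3 - u) * u / v = (u - 1) * v / 2).
    { replace ((3 - u) * u / v) with ((3 - u) * u * v / (v * v)) by (field; lra).
      rewrite Hv.
      replace ((u - 1) * v / 2) with (((3-u)*u*v + v*(u*u-5)/2)/(5-u)) by (field; lra).
      rewrite Hu. field. lra. }
    assert (L2 : (3 + u) * u / w = (u + 1) * w / 2).
    { replace ((3 + u) * u / w) with ((3 + u) * u * w / (w * w)) by (field; lra).
      rewrite Hw.
      replace ((u + 1) * w / 2) with (((3+u)*u*w - w*(u*u-5)/2)/(5+u)) by (field; lra).
      rewrite Hu. field. lra. }
    rewrite S1, S3. unfold al5, be5. fold u.
    transitivity (PI / (300 * t) * ((3 - u) * u / v) + 3 * (PI / (300 * t)) * ((3 + u) * u / w)).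
    { simpl. field. repeat split; lra. }
    rewrite L1, L2. field. lra.
  - intros x Hx. unfold H5. bnd; rewrite ?cos_PI5, ?cos_3PI5; nra.
  - intro x.
    transitivity ((1 - x^5) * ((-3/100) * x^0 + (1/75) * x^1 + (3/100) * x^2 + (4/75) * x^3)
                  + (1 - x) * (3 + 4*x + 3*x^2) / 60).
    + unfold fk. simpl. unfold b1, b2, bP, bP1, Nf. field.
    + rewrite <- G5. unfold H5. ring.
Qed.

Theorem mainTheorem9 :
  infinite_sum (S_term 3) (PI / (18 * sqrt 3)) /\
  infinite_sum (S_term 4) (PI / 48) /\
  infinite_sum (S_term 6) (7 * PI / (360 * sqrt 3)) /\
  infinite_sum (S_term 5)
    (((sqrt 5 - 1) * sqrt (5 - sqrt 5) + 3 * (sqrt 5 + 1) * sqrt (5 + sqrt 5))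
       / (600 * sqrt 10) * PI).
Proof. split; [exact sum3| split; [exact sum4| split; [exact sum6| exact sum5]]]. Qed.
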